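(* Let $A$ be a Boolean algebra (an associative ring with unity satisfying $x^2=x$ for all $x$), and let $X\subseteq A$ be a subset closed under $x\mapsto 1-x$ and with $0\in X$. Then for all $n\ge 0$: 1) $\mathcal{R}^n(X)\subseteq\mathcal{D}^{2n}(X)$, and 2) $\mathcal{D}^n(X)\subseteq\mathcal{V}_{2^{2^n}}(\mathcal{I}_{2^n}(X))$.
   Context: For $Y\subseteq A$: $\mathcal{R}(Y)=Y\cup\{-1,0,1\}\cup\{x+y: x,y\in Y\}\cup\{xy: x,y\in Y\}$; $\mathcal{D}(Y)=Y\cup\{0,1\}\cup\{x+y : x,y\in Y,\ xy=0\}\cup\{xy: x,y\in Y\}$; $\mathcal{I}_k(Y)=\{x_1x_2\cdots x_k : x_1,\dots,x_k\in Y\}$; $\mathcal{V}_k(Y)=\{x_1+\dots+x_k : x_1,\dots,x_k\in Y,\ x_ix_j=0 \text{ for all } i\neq j\}$. Powers $\mathcal{R}^n,\mathcal{D}^n$ denote $n$-fold iteration (with $\mathcal{R}^0(Y)=\mathcal{D}^0(Y)=Y$). *)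

(* Defs.v *)
From HB Require Import structures.
From mathcomp Require Import all_boot all_order all_algebra.
Set Implicit Arguments. Unset Strict Implicit. Unset Printing Implicit Defensive.
Import GRing.Theory.
Local Open Scope ring_scope.

Definition Rop (A : pzRingType) (Y : A -> Prop) : A -> Prop :=
  fun z => Y z \/ z = -1 \/ z = 0 \/ z = 1
        \/ (exists x y, Y x /\ Y y /\ z = x + y)
        \/ (exists x y, Y x /\ Y y /\ z = x * y).

Definition Dop (A : pzRingType) (Y : A -> Prop) : A -> Prop :=
  fun z => Y z \/ z = 0 \/ z = 1
        \/ (exists x y, Y x /\ Y y /\ x * y = 0 /\ z = x + y)
        \/ (exists x y, Y x /\ Y y /\ z = x * y).

Definition Iop (A : pzRingType) (k : nat) (Y : A -> Prop) : A -> Prop :=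
  fun z => exists f : 'I_k -> A, (forall i, Y (f i)) /\ z = \prod_(i < k) f i.

Definition Vop (A : pzRingType) (k : nat) (Y : A -> Prop) : A -> Prop :=
  fun z => exists f : 'I_k -> A, (forall i, Y (f i)) /\
             (forall i j, i != j -> f i * f j = 0) /\ z = \sum_(i < k) f i.

(* Main.v *)
Require Import Defs.
From HB Require Import structures.
From mathcomp Require Import all_boot all_order all_algebra.
From mathcomp Require Import zify.
Import GRing.Theory.
Local Open Scope ring_scope.

Section Aux.
Lemma two0 {A : pzRingType} (hb : forall x : A, x * x = x) (x : A) : x + x = 0.
Proof.
have H := hb (x + x); rewrite mulrDl !mulrDr !hb in H.
by apply: (addrI (x + x)); rewrite addr0.
Qed.

Lemma oppB {A : pzRingType} (hb : forall x : A, x * x = x) (x : A) : - x = x.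
Proof. by apply: (addrI x); rewrite subrr two0. Qed.

Lemma commB {A : pzRingType} (hb : forall x : A, x * x = x) (x y : A) :
  x * y = y * x.
Proof.
have H := hb (x + y); rewrite mulrDl !mulrDr !hb in H.
have S : x * y + y * x = 0.
  apply: (addrI (x + y)); rewrite addr0 -[in RHS]H.
  by rewrite addrACA [y * x + y]addrC.
rewrite -[y * x](oppB hb); apply/eqP; rewrite -addr_eq0; exact/eqP.
Qed.
Lemma mulrACA_B {A : pzRingType} (hb : forall x : A, x * x = x) (a b c d : A) :
  a * b * (c * d) = a * c * (b * d).
Proof. by rewrite -!mulrA (mulrA b) (commB hb b c) -mulrA. Qed.
End Aux.

Lemma part1 (A : pzRingType) (hbool : forall x : A, x * x = x)
  (X : A -> Prop) (hX1 : forall x, X x -> X (1 - x)) (n : nat) :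
  forall z, iter n (@Rop A) X z ->
    iter (2 * n) (@Dop A) X z /\ iter (2 * n) (@Dop A) X (1 - z).
Proof.
elim: n => [|n IH] z.
  by rewrite muln0 /= => Xz; split => //; apply: hX1.
have -> : (2 * n.+1 = (2 * n).+2)%N by lia.
rewrite /=; set Y := iter (2 * n) (@Dop A) X.
have incl : forall w, Y w -> Dop (Dop Y) w by move=> w Yw; left; left.
have prod1 : forall a b, Y a -> Y b -> Dop Y (a * b).
  by move=> a b Ya Yb; do 4 right; exists a, b.
have sum2 : forall a b, Dop Y a -> Dop Y b -> a * b = 0 -> Dop (Dop Y) (a + b).
  by move=> a b Ya Yb ab; right; right; right; left; exists a, b.
have orth : forall a : A, a * (1 - a) = 0.
  by move=> a; rewrite mulrBr mulr1 hbool subrr.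
have orth' : forall a : A, (1 - a) * a = 0.
  by move=> a; rewrite mulrBl mul1r hbool subrr.
case=> [Hz|[->|[->|[->|[[x [y [Hx [Hy ->]]]]|[x [y [Hx [Hy ->]]]]]]]]].
- by case: (IH z Hz); split; apply: incl.
- split; first by right; right; left; rewrite (oppB hbool).
  by right; left; rewrite opprK (two0 hbool).
- by split; [right; left | right; right; left; rewrite subr0].
- by split; [right; right; left | right; left; rewrite subrr].
- case: (IH x Hx) => Yx Yx'; case: (IH y Hy) => Yy Yy'.
  split.
  + have -> : x + y = x * (1 - y) + (1 - x) * y.
      by rewrite mulrBr mulr1 mulrBl mul1r addrACA -opprD (two0 hbool) subr0.
    apply: sum2; [exact: prod1|exact: prod1|].
    by rewrite (mulrACA_B hbool) orth mul0r.
  + have -> : 1 - (x + y) = x * y + (1 - x) * (1 - y).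
      rewrite mulrBl mul1r mulrBr mulr1 opprB addrCA [x*y + (x*y - x)]addrA.
      by rewrite (two0 hbool) add0r opprD addrA addrAC.
    apply: sum2; [exact: prod1|exact: prod1|].
    by rewrite (mulrACA_B hbool) orth mul0r.
- case: (IH x Hx) => Yx Yx'; case: (IH y Hy) => Yy Yy'.
  split; first by left; exact: prod1.
  have -> : 1 - x * y = (1 - x) + x * (1 - y).
    by rewrite mulrBr mulr1 addrA subrK.
  apply: sum2; [by left|exact: prod1|].
  by rewrite mulrA orth' mul0r.
Qed.

Lemma Iop_mul {A : pzRingType} (X : A -> Prop) k k' a b :
  Iop k X a -> Iop k' X b -> Iop (k + k') X (a * b).
Proof.
move=> [f [Hf ->]] [g [Hg ->]].
exists (fun i => match split i with inl j => f j | inr j => g j end); split.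
  by move=> i; case: (split i).
rewrite big_split_ord /=; congr (_ * _); apply: eq_bigr => i _.
  by rewrite (unsplitK (inl i)).
by rewrite (unsplitK (inr i)).
Qed.

Lemma Iop_one {A : pzRingType} (X : A -> Prop) k : X 1 -> Iop k X 1.
Proof. by move=> h; exists (fun _ => 1); split => //; rewrite big1. Qed.

Lemma Iop_zero {A : pzRingType} (X : A -> Prop) k : X 0 -> (0 < k)%N -> Iop k X 0.
Proof.
move=> h; case: k => // k _; exists (fun _ => 0); split => //.
by rewrite big_ord_recl mul0r.
Qed.

Definition PP {A : pzRingType} (X : A -> Prop) (m k : nat) (z : A) :=
  exists f : nat -> A, (forall i, (i < m)%N -> Iop k X (f i)) /\
    (forall i j, (i < m)%N -> (j < m)%N -> i != j -> f i * f j = 0) /\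
    z = \sum_(i < m) f i.

Lemma PP_Vop {A : pzRingType} (X : A -> Prop) m k z :
  PP X m k z -> Vop m (Iop k X) z.
Proof.
move=> [f [H1 [H2 ->]]]; exists (fun i => f (val i)); split.
  by move=> i; apply: H1; exact: ltn_ord.
split => //.
move=> i j ne; apply: H2; try exact: ltn_ord.
exact: ne.

Qed.

Lemma PP_pad {A : pzRingType} (X : A -> Prop) m m' k z :
  X 0 -> (0 < k)%N -> (m <= m')%N -> PP X m k z -> PP X m' k z.
Proof.
move=> X0 k0 le [f [H1 [H2 ->]]].
exists (fun i => if (i < m)%N then f i else 0); split; last split.
- move=> i _; case: ifP => h; [exact: H1|exact: Iop_zero].
- move=> i j _ _ ne; case: ifP => hi; last by rewrite mul0r.
  by case: ifP => hj; [exact: H2|rewrite mulr0].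
- by rewrite (big_ord_widen m' f le) big_mkcond.
Qed.

Lemma PP_Ipad {A : pzRingType} (X : A -> Prop) m k k' z :
  X 1 -> PP X m k z -> PP X m (k + k') z.
Proof.
move=> X1 [f [H1 [H2 ->]]]; exists f; split => //.
by move=> i lt; rewrite -[f i]mulr1; apply: Iop_mul; [exact: H1|exact: Iop_one].
Qed.

Lemma absorbB {A : pzRingType} (hb : forall x : A, x * x = x) (f : nat -> A) M i :
  (forall i j, (i < M)%N -> (j < M)%N -> i != j -> f i * f j = 0) ->
  (i < M)%N -> f i * \sum_(j < M) f j = f i.
Proof.
move=> H hi; rewrite mulr_sumr (bigD1 (Ordinal hi)) //= hb big1 ?addr0 //.
move=> j hj; apply: H => //.
by apply: contra hj => /eqP e; apply/eqP; apply: val_inj; rewrite /= e.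
Qed.

Lemma PP_sum {A : pzRingType} (hb : forall x : A, x * x = x) (X : A -> Prop) M k x y :
  PP X M k x -> PP X M k y -> x * y = 0 -> PP X (M + M) k (x + y).
Proof.
move=> [f [F1 [F2 ->]]] [g [G1 [G2 ->]]] xy.
have mix : forall i j, (i < M)%N -> (j < M)%N -> f i * g j = 0.
  move=> i j hi hj.
  rewrite -(absorbB hb _ _ _ F2 hi) -(absorbB hb _ _ _ G2 hj).
  rewrite (commB hb (g j) (\sum_(j < M) g j)) mulrA.
  by rewrite -(mulrA (f i)) xy mulr0 mul0r.
exists (fun i => if (i < M)%N then f i else g (i - M)%N); split; last split.
- move=> i hi; case: ifP => h; first exact: F1.
  apply: G1; move: h hi => /negbT; lia.
- move=> i j hi hj ne; case: ifP => h1; case: ifP => h2.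
  + exact: F2.
  + apply: mix => //; move: h2 hj => /negbT; lia.
  + rewrite commB //; apply: mix => //; move: h1 hi => /negbT; lia.
  + apply: G2; move: h1 h2 hi hj ne => /negbT h1 /negbT h2; try lia.
- symmetry; rewrite big_split_ord /=; congr (_ + _); apply: eq_bigr => i _.
    by rewrite ltn_ord.
  by rewrite ltnNge leq_addr /= addKn.
Qed.

Lemma sum_mul_index {A : pzRingType} (F : nat -> A) M a :
  \sum_(0 <= p < a * M) F p = \sum_(0 <= i < a) \sum_(0 <= j < M) F (i * M + j).
Proof.
elim: a => [|a IH]; first by rewrite mul0n !big_geq.
rewrite big_nat_recr //= -IH mulSnr (@big_cat_nat _ _ _ (a * M) 0 _ _ _ (leq0n _) (leq_addr M (a * M))) /=.
congr (_ + _).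
rewrite -{1}[(a * M)%N]add0n big_addn. rewrite addKn.
by apply: eq_big_nat => j _; rewrite addnC.
Qed.

Lemma PP_prod {A : pzRingType} (hb : forall x : A, x * x = x) (X : A -> Prop) M k x y :
  (0 < M)%N -> PP X M k x -> PP X M k y -> PP X (M * M) (k + k) (x * y).
Proof.
move=> M0 [f [F1 [F2 ->]]] [g [G1 [G2 ->]]].
exists (fun p => f (p %/ M)%N * g (p %% M)%N); split; last split.
- move=> p hp; apply: Iop_mul; [apply: F1; by rewrite ltn_divLR|apply: G1; exact: ltn_pmod].
- move=> p q hp hq ne; rewrite (mulrACA_B hb).
  case: (eqVneq (p %/ M)%N (q %/ M)%N) => e.
    rewrite G2 ?mulr0 ?ltn_pmod //.
    apply: contra ne => /eqP e2; apply/eqP.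
    by rewrite (divn_eq p M) (divn_eq q M) e e2.
  by rewrite F2 ?mul0r // ltn_divLR.
- rewrite -(big_mkord xpredT (fun p => f (p %/ M)%N * g (p %% M)%N)) sum_mul_index.
  rewrite mulr_suml -(big_mkord xpredT (fun i => f i * \sum_(j < M) g j)).
  apply: eq_big_nat => i /andP[_ hi].
  rewrite mulr_sumr -(big_mkord xpredT (fun j => f i * g j)); apply: eq_big_nat => j /andP[_ hj].
  by rewrite divnMDl // divn_small // addn0 modnMDl modn_small.
Qed.

Lemma PP_base {A : pzRingType} (X : A -> Prop) z : X 0 -> X z -> PP X 2 1 z.
Proof.
move=> X0 Xz; exists (fun i => if i == 0%N then z else 0); split; last split.
- move=> i _; case: ifP => _; [exists (fun _ => z)|exists (fun _ => 0)];
    by split => //; rewrite big_ord1.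
- move=> i j; case: i => [|[|i]] //; case: j => [|[|j]] //= _ _ _.
  + by rewrite mulr0.
  + by rewrite mul0r.
- by rewrite !big_ord_recl big_ord0 /= addr0 addr0.
Qed.

Lemma part2 (A : pzRingType) (hbool : forall x : A, x * x = x)
  (X : A -> Prop) (hX1 : forall x, X x -> X (1 - x)) (hX0 : X 0) (n : nat) :
  forall z, iter n (@Dop A) X z -> PP X (2 ^ (2 ^ n)) (2 ^ n) z.
Proof.
have X1 : X 1 by rewrite -(subr0 1); apply: hX1.
elim: n => [|n IH] z; first by move=> Xz; apply: PP_base.
have -> : (2 ^ n.+1 = 2 ^ n + 2 ^ n)%N by rewrite expnS mul2n addnn.
have -> : (2 ^ (2 ^ n + 2 ^ n) = 2 ^ (2 ^ n) * 2 ^ (2 ^ n))%N by rewrite expnD.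
set N := (2 ^ n)%N; set M := (2 ^ N)%N.
have N0 : (0 < N)%N by rewrite expn_gt0.
have M2 : (2 <= M)%N by rewrite /M -{1}(expn1 2) leq_exp2l.
have NN0 : (0 < N + N)%N by rewrite addn_gt0 N0.
have padM : forall w, PP X M (N + N) w -> PP X (M * M) (N + N) w.
  move=> w; apply: PP_pad => //; rewrite leq_pmulr //; lia.
rewrite /=; case=> [Hz|[->|[->|[[x [y [Hx [Hy [xy ->]]]]]|[x [y [Hx [Hy ->]]]]]]]].
- by apply: padM; apply: PP_Ipad => //; apply: IH.
- exists (fun _ => 0); split; last split.
  + by move=> i _; apply: Iop_zero.
  + by move=> *; rewrite mulr0.
  + by rewrite big1.
- exists (fun i => if i == 0%N then 1 else 0); split; last split.
  + by move=> i _; case: ifP => _; [apply: Iop_one|apply: Iop_zero].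
  + move=> i j _ _ ne; case: ifP => [/eqP ei|_]; last by rewrite mul0r.
    by case: ifP => [/eqP ej|_]; [move: ne; rewrite ei ej|rewrite mulr0].
  + have MM0 : (0 < M * M)%N by rewrite muln_gt0; lia.
    rewrite -(prednK MM0) big_ord_recl /= big1 ?addr0 //.
- have MM : (M + M <= M * M)%N by nia.
  apply: (@PP_pad _ X _ _ _ _ hX0 NN0 MM).
  by apply: PP_Ipad => //; apply: (PP_sum hbool) => //; [apply: IH|apply: IH].
- by apply: PP_prod => //; [lia|apply: IH|apply: IH].
Qed.

Theorem mainTheorem7 (A : pzRingType) (hbool : forall x : A, x * x = x)
  (X : A -> Prop) (hX1 : forall x, X x -> X (1 - x)) (hX0 : X 0) :
  forall n : nat,
    (forall z, iter n (@Rop A) X z -> iter (2 * n) (@Dop A) X z) /\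
    (forall z, iter n (@Dop A) X z ->
               Vop (2 ^ (2 ^ n)) (Iop (2 ^ n) X) z).
Proof.
move=> n; split.
  by move=> z Hz; case: (@part1 A hbool X hX1 n z Hz).
by move=> z Hz; apply: PP_Vop; exact: (@part2 A hbool X hX1 hX0 n z Hz).
Qed.
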